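(* Let $a<b$, $\lambda>0$, let $H:\mathbb{R}\to\mathbb{R}$, $H(y):=\tfrac12\left(\tfrac12 y^2-\lambda\right)^2$, let $\theta\in C[a,b]$ with $\min_{x\in[a,b]}\theta(x)>0$, and let $F\in C^1[a,b]$ with $F(a)=F(b)=0$, $F(x)\neq 0$ for $x\in(a,b)$ and $\|F\|_\infty<(2\lambda/3)^{3/2}$. Let $X:=C_0[a,b]:=\{v\in C[a,b]\mid v(a)=v(b)=0\}$ be endowed with the norm $\|\cdot\|_p$ for some $p\in[1,\infty]$, and define $$K:X\to\mathbb{R},\qquad K(v):=\int_a^b\theta\cdot\big(H\circ v-Fv\big).$$ Then $K$ is Gâteaux differentiable (at every point of $X$); moreover, for $v\in X$, $K$ is Fréchet differentiable at $v$ if and only if $p\geq 4$.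
   Context: $\|\cdot\|_p$ denotes the $L^p(a,b)$-norm restricted to $X$ (for $p=\infty$ the supremum norm). Integrals are Riemann integrals over $[a,b]$. *)

(* Defs.v *)
From Stdlib Require Import Reals.
From Coquelicot Require Import Coquelicot.
Open Scope R_scope.

(* Functions on [a,b] are represented as functions R -> R; only their
   values on [a,b] matter. *)

Definition cont_on (a b : R) (v : R -> R) : Prop :=
  forall x, a <= x <= b ->
  forall eps, 0 < eps -> exists delta, 0 < delta /\
    forall y, a <= y <= b -> Rabs (y - x) < delta -> Rabs (v y - v x) < eps.

Definition C1_on (a b : R) (F : R -> R) : Prop :=
  exists F' : R -> R, cont_on a b F' /\
    forall x, a <= x <= b ->
    forall eps, 0 < eps -> exists delta, 0 < delta /\
      forall y, a <= y <= b -> Rabs (y - x) < delta ->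
        Rabs (F y - F x - F' x * (y - x)) <= eps * Rabs (y - x).

Definition in_X (a b : R) (v : R -> R) : Prop :=
  cont_on a b v /\ v a = 0 /\ v b = 0.

(* x^q for x >= 0, with the convention 0^q = 0 (q > 0) *)
Definition rpow (x q : R) : R :=
  if Req_EM_T x 0 then 0 else Rpower x q.

Definition supnorm (a b : R) (v : R -> R) : R :=
  real (Lub_Rbar (fun r => exists x, a <= x <= b /\ r = Rabs (v x))).

Definition Lpnorm (a b q : R) (v : R -> R) : R :=
  rpow (RInt (fun x => rpow (Rabs (v x)) q) a b) (/ q).

Definition pnorm (a b : R) (p : Rbar) (v : R -> R) : R :=
  match p with
  | Finite q => Lpnorm a b q v
  | _ => supnorm a b v
  end.

Definition bounded_linear (a b : R) (N : (R -> R) -> R)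
  (L : (R -> R) -> R) : Prop :=
  (forall u w, in_X a b u -> in_X a b w ->
     L (fun x => u x + w x) = L u + L w) /\
  (forall c u, in_X a b u -> L (fun x => c * u x) = c * L u) /\
  (exists C, forall u, in_X a b u -> Rabs (L u) <= C * N u).

Definition gateaux_diff (a b : R) (N : (R -> R) -> R)
  (K : (R -> R) -> R) (v : R -> R) : Prop :=
  exists L, bounded_linear a b N L /\
    forall h, in_X a b h ->
      is_lim (fun t => (K (fun x => v x + t * h x) - K v) / t) 0 (L h).

Definition frechet_diff (a b : R) (N : (R -> R) -> R)
  (K : (R -> R) -> R) (v : R -> R) : Prop :=
  exists L, bounded_linear a b N L /\
    forall eps, 0 < eps -> exists delta, 0 < delta /\
      forall h, in_X a b h -> 0 < N h < delta ->
        Rabs (K (fun x => v x + h x) - K v - L h) <= eps * N h.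

Definition Hfun (lam y : R) : R := / 2 * (/ 2 * y ^ 2 - lam) ^ 2.

Definition Kfun (a b lam : R) (theta F : R -> R) (v : R -> R) : R :=
  RInt (fun x => theta x * (Hfun lam (v x) - F x * v x)) a b.

(* Main.v *)
Require Import Defs.
From Stdlib Require Import Reals Lra Lia FunctionalExtensionality.
From Coquelicot Require Import Coquelicot.
Open Scope R_scope.

Lemma cpt_intro (f : R -> R) x :
  (forall eps, 0 < eps -> exists d, 0 < d /\ forall y, Rabs (y - x) < d -> Rabs (f y - f x) < eps) ->
  continuity_pt f x.
Proof.
  intros H eps Heps. destruct (H eps Heps) as [d [Hd Hy]].
  exists d; split; [lra|]. intros y [_ Hy2]. apply Hy. exact Hy2.
Qed.

Lemma cpt_elim (f : R -> R) x : continuity_pt f x ->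
  forall eps, 0 < eps -> exists d, 0 < d /\ forall y, Rabs (y - x) < d -> Rabs (f y - f x) < eps.
Proof.
  intros H eps Heps. destruct (H eps Heps) as [d [Hd Hy]].
  exists d; split; [lra|]. intros y Hyx.
  destruct (Req_dec y x) as [->|Hne].
  - unfold Rminus; rewrite Rplus_opp_r, Rabs_R0; lra.
  - apply (Hy y). split; [split; [exact I| auto] | exact Hyx].
Qed.

Definition cl (a b x : R) := Rmax a (Rmin b x).

Lemma cl_in a b x : a <= b -> a <= cl a b x <= b.
Proof. intros; unfold cl, Rmax, Rmin; repeat destruct Rle_dec; lra. Qed.

Lemma cl_id a b x : a <= x <= b -> cl a b x = x.
Proof. intros; unfold cl, Rmax, Rmin; repeat destruct Rle_dec; lra. Qed.

Lemma cl_lip a b x y : a <= b -> Rabs (cl a b y - cl a b x) <= Rabs (y - x).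
Proof. intros; unfold cl, Rmax, Rmin; repeat destruct Rle_dec; unfold Rabs; repeat destruct Rcase_abs; lra. Qed.

Lemma ok_iff a b f : a <= b ->
  cont_on a b f <-> forall x, continuity_pt (fun y => f (cl a b y)) x.
Proof.
  intros hab; split.
  - intros H x. apply cpt_intro. intros eps Heps.
    destruct (H (cl a b x) (cl_in a b x hab) eps Heps) as [d [Hd Hy]].
    exists d; split; auto. intros y Hyx. apply Hy. apply cl_in; auto.
    eapply Rle_lt_trans; [apply cl_lip; auto| exact Hyx].
  - intros H x Hx eps Heps. destruct (cpt_elim _ x (H x) eps Heps) as [d [Hd Hy]].
    exists d; split; auto. intros y Hy1 Hy2. specialize (Hy y Hy2).
    rewrite !cl_id in Hy; auto.
Qed.


Lemma ok_plus a b f g : a <= b -> cont_on a b f -> cont_on a b g -> cont_on a b (fun x => f x + g x).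
Proof.
  intros hab Hf Hg. apply ok_iff; auto. rewrite ok_iff in Hf, Hg; auto. intros x.
  exact (continuity_pt_plus _ _ x (Hf x) (Hg x)).
Qed.

Lemma ok_mult a b f g : a <= b -> cont_on a b f -> cont_on a b g -> cont_on a b (fun x => f x * g x).
Proof.
  intros hab Hf Hg. apply ok_iff; auto. rewrite ok_iff in Hf, Hg; auto. intros x.
  exact (continuity_pt_mult _ _ x (Hf x) (Hg x)).
Qed.

Lemma ok_const a b c : a <= b -> cont_on a b (fun _ => c).
Proof.
  intros hab. apply ok_iff; auto. intros x. apply continuity_pt_const. intros u v; reflexivity.
Qed.

Lemma ok_comp a b (g : R -> R) f : a <= b -> (forall y, continuity_pt g y) ->
  cont_on a b f -> cont_on a b (fun x => g (f x)).
Proof.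
  intros hab Hg Hf. apply ok_iff; auto. rewrite ok_iff in Hf; auto. intros x.
  exact (continuity_pt_comp _ g x (Hf x) (Hg _)).
Qed.

Lemma ok_ex a b f : a <= b -> cont_on a b f -> ex_RInt f a b.
Proof.
  intros hab Hf. rewrite ok_iff in Hf; auto.
  apply (ex_RInt_ext (fun y => f (cl a b y))).
  - intros x Hx. rewrite Rmin_left, Rmax_right in Hx by auto. rewrite cl_id; auto; lra.
  - apply (@ex_RInt_continuous R_CompleteNormedModule). intros z _. apply continuity_pt_filterlim. apply Hf.
Qed.

Lemma ok_bound a b f : a <= b -> cont_on a b f -> exists M, 0 <= M /\ forall x, a <= x <= b -> Rabs (f x) <= M.
Proof.
  intros hab Hf. rewrite ok_iff in Hf; auto.
  destruct (continuity_ab_maj (fun y => Rabs (f (cl a b y))) a b hab) as [m [Hm _]].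
  - intros c _. exact (continuity_pt_comp _ Rabs c (Hf c) (Rcontinuity_abs _)).
  - exists (Rabs (f (cl a b m))). split; [apply Rabs_pos|]. intros x Hx.
    specialize (Hm x Hx). simpl in Hm. rewrite cl_id in Hm; auto.
Qed.

Lemma rpow_nz x q : x <> 0 -> rpow x q = Rpower x q.
Proof. intros H; unfold rpow; destruct Req_EM_T; [contradiction|reflexivity]. Qed.

Lemma rpow_0 q : rpow 0 q = 0.
Proof. unfold rpow; destruct Req_EM_T; [reflexivity|contradiction]. Qed.

Lemma rpow_ge0 x q : 0 <= rpow x q.
Proof. unfold rpow; destruct Req_EM_T; [lra|]. unfold Rpower; left; apply exp_pos. Qed.

Lemma Rpower_pos x q : 0 < Rpower x q.
Proof. unfold Rpower; apply exp_pos. Qed.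

Lemma ln_le_xm1 x : 0 < x -> ln x <= x - 1.
Proof. intros H. generalize (exp_ineq1_le (ln x)). rewrite exp_ln; lra. Qed.

Lemma exp_le_mono x y : x <= y -> exp x <= exp y.
Proof. intros [H|H]; [left; apply exp_increasing; auto| subst; lra]. Qed.

Lemma core_ineq s u : 0 < s <= 1 -> 0 < u -> Rpower u s <= s * u + (1 - s).
Proof.
  intros Hs Hu. set (m := s * u + (1 - s)).
  assert (Hm : 0 < m) by (unfold m; nra).
  assert (H1 := ln_le_xm1 (u / m) ltac:(apply Rdiv_lt_0_compat; lra)).
  assert (H2 := ln_le_xm1 (/ m) ltac:(apply Rinv_0_lt_compat; lra)).
  unfold Rdiv in H1. rewrite ln_mult in H1 by (try apply Rinv_0_lt_compat; lra).
  rewrite ln_Rinv in H1, H2 by lra.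
  assert (E : s * (u * / m - 1) + (1 - s) * (/ m - 1) = 0).
  { unfold m in *. field. lra. }
  assert (s * ln u <= ln m) by nra.
  unfold Rpower. rewrite <- (exp_ln m) by lra. apply exp_le_mono. lra.
Qed.

Lemma cont_rpow p : 0 < p -> forall y, continuity_pt (fun z => rpow (Rabs z) p) y.
Proof.
  intros Hp y. apply cpt_intro. intros eps Heps.
  destruct (Req_dec y 0) as [->|Hy].
  - exists (Rpower eps (/ p)). split; [apply Rpower_pos|]. intros z Hz.
    rewrite Rabs_R0, rpow_0, Rminus_0_r. rewrite Rminus_0_r in Hz.
    destruct (Req_dec (Rabs z) 0) as [E|E].
    + rewrite E, rpow_0, Rabs_R0; lra.
    + rewrite rpow_nz by auto. rewrite Rabs_pos_eq by (left; apply Rpower_pos).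
      replace eps with (Rpower (Rpower eps (/ p)) p).
      * apply Rlt_Rpower_l; auto. split; auto. generalize (Rabs_pos z); lra.
      * rewrite Rpower_mult, Rinv_l, Rpower_1; lra.
  - assert (Hc : continuity_pt (fun z => exp (p * ln (Rabs z))) y).
    { apply (continuity_pt_comp (fun z => p * ln (Rabs z)) exp).
      - apply (continuity_pt_scal (fun z => ln (Rabs z))).
        apply (continuity_pt_comp Rabs ln). apply Rcontinuity_abs.
        apply derivable_continuous_pt. exists (/ Rabs y). apply derivable_pt_lim_ln.
        apply Rabs_pos_lt; auto.
      - apply derivable_continuous_pt, derivable_pt_exp. }
    destruct (cpt_elim _ _ Hc eps Heps) as [d [Hd Hz]].
    exists (Rmin d (Rabs y)). split. { apply Rmin_pos; auto; apply Rabs_pos_lt; auto. }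
    intros z Hzy. assert (Hz0 : Rabs z <> 0).
    { intro E. apply Rabs_eq_0 in E. subst z. assert (h := Rmin_r d (Rabs y)).
      rewrite Rminus_0_l, Rabs_Ropp in Hzy. lra. }
    rewrite !rpow_nz; auto. 2: { intro E; apply Rabs_eq_0 in E; auto. }
    apply Hz. assert (h := Rmin_l d (Rabs y)); lra.
Qed.

Lemma young_pt (y c p : R) (k : nat) : 0 <= y -> 0 < c -> 1 <= p -> (1 <= k)%nat -> INR k <= p ->
  y ^ k <= INR k / p * rpow y p * Rpower c (INR k - p) + (1 - INR k / p) * c ^ k.
Proof.
  intros Hy Hc Hp Hk Hkp.
  assert (Hk1 : 1 <= INR k) by (apply (le_INR 1); auto).
  assert (Hs : 0 < INR k / p <= 1).
  { split. apply Rdiv_lt_0_compat; lra. apply Rmult_le_reg_r with p; [lra|]. unfold Rdiv; rewrite Rmult_assoc, Rinv_l; lra. }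
  destruct Hy as [Hy|Hy].
  2:{ subst y. rewrite pow_i by (apply Nat.lt_le_trans with 1%nat; auto). rewrite rpow_0.
      assert (0 <= (1 - INR k / p) * c ^ k) by (apply Rmult_le_pos; [lra| apply pow_le; lra]).
      lra. }
  rewrite rpow_nz by lra.
  assert (Hyc : 0 < y / c) by (apply Rdiv_lt_0_compat; lra).
  assert (H := core_ineq (INR k / p) (Rpower (y / c) p) Hs (Rpower_pos _ _)).
  rewrite Rpower_mult in H. replace (p * (INR k / p)) with (INR k) in H by (field; lra).
  rewrite Rpower_pow in H by auto.
  assert (Hck : 0 < c ^ k) by (apply pow_lt; lra).
  apply Rmult_le_compat_r with (r := c ^ k) in H; [|lra].
  rewrite <- Rpow_mult_distr in H. replace (y / c * c) with y in H by (field; lra).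
  eapply Rle_trans; [exact H|]. right.
  rewrite Rmult_plus_distr_r. f_equal. rewrite !Rmult_assoc. f_equal.
  rewrite <- (Rpower_pow k c) by lra. unfold Rpower.
  rewrite <- !exp_plus. f_equal. unfold Rdiv. rewrite ln_mult, ln_Rinv by (try apply Rinv_0_lt_compat; lra). ring.
Qed.

Lemma plusR (x y : R) : plus x y = x + y. Proof. reflexivity. Qed.
Lemma scalR (x y : R) : scal x y = x * y. Proof. reflexivity. Qed.

Lemma is_RInt_R_plus (f g : R -> R) a b If Ig : is_RInt f a b If -> is_RInt g a b Ig ->
  is_RInt (fun x => f x + g x) a b (If + Ig).
Proof. intros H1 H2. exact (is_RInt_plus f g a b If Ig H1 H2). Qed.

Lemma is_RInt_R_scal (f : R -> R) a b k If : is_RInt f a b If ->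
  is_RInt (fun x => k * f x) a b (k * If).
Proof. intros H1. exact (is_RInt_scal f a b k If H1). Qed.

Lemma is_RInt_R_const a b c : is_RInt (fun _ => c) a b (c * (b - a)).
Proof. rewrite Rmult_comm. exact (is_RInt_const a b c). Qed.

Lemma RInt_correct_R (f : R -> R) a b : ex_RInt f a b -> is_RInt f a b (RInt f a b).
Proof. exact (@RInt_correct R_CompleteNormedModule f a b). Qed.

Lemma is_RInt_ext_R (f g : R -> R) a b l : (forall x, f x = g x) -> is_RInt f a b l -> is_RInt g a b l.
Proof. intros H. apply is_RInt_ext. intros; apply H. Qed.

Lemma RInt_const_R a b c : RInt (fun _ => c) a b = c * (b - a).
Proof. apply is_RInt_unique, is_RInt_R_const. Qed.

Lemma RInt_affine (f : R -> R) a b al be : ex_RInt f a b ->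
  RInt (fun x => al * f x + be) a b = al * RInt f a b + be * (b - a).
Proof.
  intros Hf. apply is_RInt_unique. apply is_RInt_R_plus.
  apply is_RInt_R_scal, RInt_correct_R, Hf. apply is_RInt_R_const.
Qed.

Lemma cont_powabs k y : continuity_pt (fun z => Rabs z ^ k) y.
Proof.
  apply (continuity_pt_comp Rabs (fun z => z ^ k)). apply Rcontinuity_abs.
  apply derivable_continuous_pt, derivable_pt_pow.
Qed.

Lemma cont_pow k y : continuity_pt (fun z => z ^ k) y.
Proof. apply derivable_continuous_pt, derivable_pt_pow. Qed.

Lemma RInt_ge0' f a b : a <= b -> cont_on a b f -> (forall x, a <= x <= b -> 0 <= f x) -> 0 <= RInt f a b.
Proof. intros hab Hf H. apply RInt_ge_0; auto. apply ok_ex; auto. intros; apply H; lra. Qed.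

Lemma RInt_le' f g a b : a <= b -> cont_on a b f -> cont_on a b g ->
  (forall x, a <= x <= b -> f x <= g x) -> RInt f a b <= RInt g a b.
Proof. intros hab Hf Hg H. apply RInt_le; auto; try apply ok_ex; auto. intros; apply H; lra. Qed.

Lemma pow_le_base c k : 0 <= c <= 1 -> (1 <= k)%nat -> c ^ k <= c.
Proof.
  intros Hc Hk. induction k as [|k IH]; [lia|].
  destruct k as [|k]. simpl; lra.
  assert (IH' := IH ltac:(lia)). change (c ^ S (S k)) with (c * c ^ S k). nra.
Qed.

Lemma NB_fin a b p k u : a < b -> 1 <= p -> (1 <= k)%nat -> INR k <= p -> cont_on a b u ->
  RInt (fun x => Rabs (u x) ^ k) a b <= (1 + (b - a)) * (Lpnorm a b p u) ^ k.
Proof.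
  intros hab Hp Hk Hkp Hu. assert (hab' : a <= b) by lra.
  assert (Hk1 : 1 <= INR k) by (apply (le_INR 1); auto).
  assert (Hs : 0 < INR k / p <= 1).
  { split. apply Rdiv_lt_0_compat; lra. apply Rmult_le_reg_r with p; [lra|]. unfold Rdiv; rewrite Rmult_assoc, Rinv_l; lra. }
  assert (Cuk : cont_on a b (fun x => Rabs (u x) ^ k)) by (apply (ok_comp a b (fun z => Rabs z ^ k) u); auto; apply cont_powabs).
  assert (Cup : cont_on a b (fun x => rpow (Rabs (u x)) p)) by (apply (ok_comp a b (fun z => rpow (Rabs z) p)); auto; apply cont_rpow; lra).
  set (I := RInt (fun x => rpow (Rabs (u x)) p) a b).
  assert (HI : 0 <= I) by (apply RInt_ge0'; auto; intros; apply rpow_ge0).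
  assert (key : forall c, 0 < c -> RInt (fun x => Rabs (u x) ^ k) a b <=
     INR k / p * Rpower c (INR k - p) * I + (1 - INR k / p) * c ^ k * (b - a)).
  { intros c Hc. unfold I. rewrite <- RInt_affine by (apply ok_ex; auto).
    apply RInt_le'; auto.
    - apply ok_plus; auto. apply ok_mult; auto using ok_const. apply ok_const; auto.
    - intros x Hx. eapply Rle_trans. apply (young_pt (Rabs (u x)) c p k); auto using Rabs_pos.
      right; ring. }
  unfold Lpnorm. fold I. destruct HI as [HI|HI].
  - rewrite rpow_nz by lra. set (N := Rpower I (/ p)).
    assert (HN : 0 < N) by apply Rpower_pos.
    eapply Rle_trans; [apply (key N HN)|].
    assert (E : Rpower N (INR k - p) * I = N ^ k).
    { replace I with (Rpower N p).
      - rewrite <- Rpower_plus. replace (INR k - p + p) with (INR k) by ring. apply Rpower_pow; auto.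
      - unfold N. rewrite Rpower_mult, Rinv_l, Rpower_1; lra. }
    rewrite Rmult_assoc, E.
    assert (0 < N ^ k) by (apply pow_lt; auto).
    assert (0 <= (1 - INR k / p) * (b - a) <= b - a) by (split; [apply Rmult_le_pos|]; nra).
    nra.
  - rewrite <- HI, rpow_0, pow_i by (apply Nat.lt_le_trans with 1%nat; auto). rewrite Rmult_0_r.
    rewrite <- HI in key.
    set (X := RInt (fun x => Rabs (u x) ^ k) a b) in *.
    destruct (Rle_or_lt X 0) as [H|H]; auto. exfalso.
    set (c := Rmin 1 (X / (b - a + 1))).
    assert (Hc : 0 < c) by (apply Rmin_pos; [lra| apply Rdiv_lt_0_compat; lra]).
    specialize (key c Hc). rewrite Rmult_0_r, Rplus_0_l in key.
    assert (Hck : c ^ k <= c).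
    { apply pow_le_base; auto. split; [lra| unfold c; apply Rmin_l]. }
    assert (c * (b - a + 1) <= X).
    { unfold c. assert (h := Rmin_r 1 (X / (b - a + 1))).
      apply Rmult_le_compat_r with (r := b - a + 1) in h; [|lra].
      unfold Rdiv in h. rewrite Rmult_assoc, Rinv_l in h by lra. lra. }
    assert (0 <= (1 - INR k / p)) by lra.
    assert (0 <= c ^ k) by (apply pow_le; lra).
    assert ((1 - INR k / p) * c ^ k * (b - a) <= c ^ k * (b - a)).
    { apply Rmult_le_compat_r; [lra|]. assert (0 < INR k / p) by lra. nra. }
    assert (c ^ k * (b - a) <= c * (b - a)) by (apply Rmult_le_compat_r; lra).
    nra.
Qed.

Lemma sup_bound a b u : a <= b -> cont_on a b u ->
  (forall x, a <= x <= b -> Rabs (u x) <= supnorm a b u) /\ 0 <= supnorm a b u.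
Proof.
  intros hab Hu. destruct (ok_bound a b u hab Hu) as [M [HM0 HM]].
  unfold supnorm.
  set (E := fun r => exists x, a <= x <= b /\ r = Rabs (u x)).
  destruct (Lub_Rbar_correct E) as [Hub Hl].
  assert (Hle : Rbar_le (Lub_Rbar E) M).
  { apply Hl. intros r [x [Hx ->]]. simpl. apply HM; auto. }
  assert (Hge : forall x, a <= x <= b -> Rbar_le (Rabs (u x)) (Lub_Rbar E)).
  { intros x Hx. apply Hub. exists x; auto. }
  destruct (Lub_Rbar E) as [l| |] eqn:El; simpl in *.
  - split. intros x Hx; apply (Hge x Hx). eapply Rle_trans; [apply Rabs_pos| apply (Hge a); lra].
  - contradiction.
  - exfalso. apply (Hge a); lra.
Qed.

Lemma pnorm_ge0 a b p u : a <= b -> cont_on a b u -> 0 <= pnorm a b p u.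
Proof.
  intros hab Hu. destruct p; simpl; try apply (sup_bound a b u hab Hu).
  unfold Lpnorm. apply rpow_ge0.
Qed.

Lemma NB a b p k u : a < b -> Rbar_le 1 p -> (1 <= k)%nat -> Rbar_le (INR k) p -> cont_on a b u ->
  RInt (fun x => Rabs (u x) ^ k) a b <= (1 + (b - a)) * (pnorm a b p u) ^ k.
Proof.
  intros hab H1 Hk Hkp Hu. assert (hab' : a <= b) by lra.
  destruct p as [q| |]; simpl in H1, Hkp |- *.
  - apply NB_fin; auto.
  - destruct (sup_bound a b u hab' Hu) as [Hs Hs0].
    set (S := supnorm a b u) in *.
    eapply Rle_trans.
    + apply (RInt_le' _ (fun _ => S ^ k)); auto.
      * apply (ok_comp a b (fun z => Rabs z ^ k) u); auto; apply cont_powabs.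
      * apply ok_const; auto.
      * intros x Hx. apply pow_incr. split; [apply Rabs_pos| apply Hs; auto].
    + rewrite RInt_const_R. assert (0 <= S ^ k) by (apply pow_le; auto). nra.
  - contradiction.
Qed.

Lemma ok_minus a b f g : a <= b -> cont_on a b f -> cont_on a b g -> cont_on a b (fun x => f x - g x).
Proof.
  intros hab Hf Hg. apply (ok_plus a b f (fun x => - g x)); auto.
  apply (ok_comp a b Ropp g); auto. intros y; apply continuity_pt_opp, continuity_pt_id.
Qed.

Lemma ok_pow a b f k : a <= b -> cont_on a b f -> cont_on a b (fun x => f x ^ k).
Proof. intros hab Hf. apply (ok_comp a b (fun z => z ^ k) f); auto. apply cont_pow. Qed.

Lemma ok_div a b f c : a <= b -> cont_on a b f -> cont_on a b (fun x => f x / c).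
Proof. intros hab Hf. apply (ok_mult a b f (fun _ => / c)); auto. apply ok_const; auto. Qed.

Lemma ok_opp a b f : a <= b -> cont_on a b f -> cont_on a b (fun x => - f x).
Proof.
  intros hab Hf. apply (ok_comp a b Ropp f); auto. intros y; apply continuity_pt_opp, continuity_pt_id.
Qed.

Ltac okt := repeat first [ assumption | apply ok_plus | apply ok_minus | apply ok_mult | apply ok_div
  | apply ok_pow | apply ok_const | apply ok_opp ].

Definition Lfun (a b lam : R) (theta F v h : R -> R) : R :=
  RInt (fun x => theta x * ((v x ^ 2 / 2 - lam) * v x - F x) * h x) a b.
Definition Afun (a b lam : R) (theta v h : R -> R) : R :=
  RInt (fun x => theta x * (3 / 4 * v x ^ 2 - lam / 2) * h x ^ 2) a b.
Definition Bfun (a b : R) (theta v h : R -> R) : R :=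
  RInt (fun x => theta x * v x / 2 * h x ^ 3) a b.
Definition Cfun (a b : R) (theta h : R -> R) : R :=
  RInt (fun x => theta x / 8 * h x ^ 4) a b.

Lemma expansion a b lam theta F v h t : a <= b -> cont_on a b theta -> cont_on a b F ->
  cont_on a b v -> cont_on a b h ->
  Kfun a b lam theta F (fun x => v x + t * h x) =
  Kfun a b lam theta F v + t * Lfun a b lam theta F v h + t ^ 2 * Afun a b lam theta v h
  + t ^ 3 * Bfun a b theta v h + t ^ 4 * Cfun a b theta h.
Proof.
  intros hab Ht HF Hv Hh. unfold Kfun at 1. apply is_RInt_unique.
  apply (is_RInt_ext_R (fun x => theta x * (Hfun lam (v x) - F x * v x)
    + t * (theta x * ((v x ^ 2 / 2 - lam) * v x - F x) * h x)
    + t ^ 2 * (theta x * (3 / 4 * v x ^ 2 - lam / 2) * h x ^ 2)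
    + t ^ 3 * (theta x * v x / 2 * h x ^ 3)
    + t ^ 4 * (theta x / 8 * h x ^ 4))).
  { intros x. unfold Hfun. field. }
  unfold Kfun, Lfun, Afun, Bfun, Cfun.
  apply is_RInt_R_plus. apply is_RInt_R_plus. apply is_RInt_R_plus. apply is_RInt_R_plus.
  1: apply RInt_correct_R, ok_ex; [assumption|]; unfold Hfun.
  2-5: apply is_RInt_R_scal; apply RInt_correct_R, ok_ex; [assumption|].
  all: okt.
Qed.

Lemma C1_cont a b F : C1_on a b F -> cont_on a b F.
Proof.
  intros [F' [_ HF]] x Hx eps Heps.
  destruct (HF x Hx 1 Rlt_0_1) as [d [Hd Hy]].
  set (K := Rabs (F' x) + 2).
  assert (HK : 0 < K) by (unfold K; generalize (Rabs_pos (F' x)); lra).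
  exists (Rmin d (eps / K)). split. { apply Rmin_pos; auto. apply Rdiv_lt_0_compat; auto. }
  intros y Hy1 Hy2. assert (Hd1 := Rmin_l d (eps / K)). assert (Hd2 := Rmin_r d (eps / K)).
  specialize (Hy y Hy1 ltac:(lra)).
  assert (E : Rabs (F y - F x) <= (Rabs (F' x) + 1) * Rabs (y - x)).
  { replace (F y - F x) with ((F y - F x - F' x * (y - x)) + F' x * (y - x)) by ring.
    eapply Rle_trans; [apply Rabs_triang|]. rewrite Rabs_mult. lra. }
  assert (Rabs (y - x) * K < eps).
  { apply Rlt_le_trans with (eps / K * K). apply Rmult_lt_compat_r; lra.
    right; field; lra. }
  unfold K in *. generalize (Rabs_pos (y - x)); nra.
Qed.

Lemma RInt_scal_R (f : R -> R) a b k : ex_RInt f a b -> RInt (fun x => k * f x) a b = k * RInt f a b.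
Proof. intros Hf. apply is_RInt_unique. apply is_RInt_R_scal, RInt_correct_R, Hf. Qed.

Lemma L_bl a b lam theta F v p : a < b -> cont_on a b theta -> cont_on a b F -> cont_on a b v ->
  Rbar_le 1 p -> bounded_linear a b (pnorm a b p) (Lfun a b lam theta F v).
Proof.
  intros hab Ht HF Hv Hp. assert (hab' : a <= b) by lra.
  set (g := fun x => theta x * ((v x ^ 2 / 2 - lam) * v x - F x)).
  assert (Hg : cont_on a b g) by (unfold g; okt).
  unfold Lfun. fold g. split; [|split].
  - intros u w [Hu _] [Hw _]. apply is_RInt_unique.
    apply (is_RInt_ext_R (fun x => g x * u x + g x * w x)). { intros; unfold g; cbv beta; ring. }
    apply is_RInt_R_plus; apply RInt_correct_R, ok_ex; auto; okt.
  - intros c u [Hu _]. apply is_RInt_unique.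
    apply (is_RInt_ext_R (fun x => c * (g x * u x))). { intros; unfold g; cbv beta; ring. }
    apply is_RInt_R_scal; apply RInt_correct_R, ok_ex; auto; okt.
  - destruct (ok_bound a b g hab' Hg) as [G [HG0 HG]].
    exists (G * (1 + (b - a))). intros u [Hu _].
    assert (Hgu : cont_on a b (fun x => g x * u x)) by okt.
    eapply Rle_trans; [apply abs_RInt_le; auto; apply ok_ex; auto|].
    assert (Cu1 : cont_on a b (fun x => Rabs (u x) ^ 1)) by (apply (ok_comp a b (fun z => Rabs z ^ 1) u); auto; apply cont_powabs).
    eapply Rle_trans.
    + apply (RInt_le' _ (fun x => G * (Rabs (u x) ^ 1))); auto.
      * apply (ok_comp a b Rabs (fun x => g x * u x)); auto. apply Rcontinuity_abs.
      * okt.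
      * intros x Hx. rewrite Rabs_mult, pow_1. apply Rmult_le_compat_r; [apply Rabs_pos| apply HG; auto].
    + rewrite RInt_scal_R by (apply ok_ex; auto).
      assert (H := NB a b p 1 u hab Hp (le_n 1) ltac:(simpl; auto) Hu). rewrite pow_1 in H.
      rewrite Rmult_assoc. apply Rmult_le_compat_l; auto.
Qed.

Lemma gateaux a b lam theta F v p : a < b -> cont_on a b theta -> cont_on a b F -> in_X a b v ->
  Rbar_le 1 p -> gateaux_diff a b (pnorm a b p) (Kfun a b lam theta F) v.
Proof.
  intros hab Ht HF [Hv _] Hp. assert (hab' : a <= b) by lra.
  exists (Lfun a b lam theta F v). split. apply L_bl; auto.
  intros h [Hh _].
  set (L := Lfun a b lam theta F v h). set (A := Afun a b lam theta v h).
  set (B := Bfun a b theta v h). set (C := Cfun a b theta h).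
  apply (is_lim_ext_loc (fun t => L + t * A + t ^ 2 * B + t ^ 3 * C)).
  - exists (mkposreal 1 Rlt_0_1). intros y _ Hy.
    rewrite expansion by auto. fold L A B C. field. auto.
  - assert (E : (fun t => L + t * A + t ^ 2 * B + t ^ 3 * C) 0 = L) by (cbv beta; ring).
    assert (H : is_lim (fun t => L + t * A + t ^ 2 * B + t ^ 3 * C) 0
      ((fun t => L + t * A + t ^ 2 * B + t ^ 3 * C) 0)).
    { apply (is_lim_continuity (fun t => L + t * A + t ^ 2 * B + t ^ 3 * C) 0). apply derivable_continuous_pt. reg. }
    cbv beta in E, H. rewrite E in H. exact H.
Qed.

Lemma coef_bound a b p k c h M : a < b -> Rbar_le 1 p -> (1 <= k)%nat -> Rbar_le (INR k) p ->
  cont_on a b c -> cont_on a b h -> 0 <= M -> (forall x, a <= x <= b -> Rabs (c x) <= M) ->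
  Rabs (RInt (fun x => c x * h x ^ k) a b) <= M * ((1 + (b - a)) * (pnorm a b p h) ^ k).
Proof.
  intros hab Hp Hk Hkp Hc Hh HM0 HM. assert (hab' : a <= b) by lra.
  assert (Hch : cont_on a b (fun x => c x * h x ^ k)) by okt.
  assert (Cuk : cont_on a b (fun x => Rabs (h x) ^ k)) by (apply (ok_comp a b (fun z => Rabs z ^ k) h); auto; apply cont_powabs).
  eapply Rle_trans; [apply abs_RInt_le; auto; apply ok_ex; auto|].
  eapply Rle_trans.
  - apply (RInt_le' _ (fun x => M * (Rabs (h x) ^ k))); auto.
    + apply (ok_comp a b Rabs (fun x => c x * h x ^ k)); auto. apply Rcontinuity_abs.
    + okt.
    + intros x Hx. rewrite Rabs_mult, <- RPow_abs. apply Rmult_le_compat_r; [apply pow_le, Rabs_pos| apply HM; auto].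
  - rewrite RInt_scal_R by (apply ok_ex; auto).
    apply Rmult_le_compat_l; auto. apply NB; auto.
Qed.

Lemma frechet_pos a b lam theta F v p : a < b -> cont_on a b theta -> cont_on a b F -> in_X a b v ->
  Rbar_le 4 p -> frechet_diff a b (pnorm a b p) (Kfun a b lam theta F) v.
Proof.
  intros hab Ht HF [Hv _] Hp4. assert (hab' : a <= b) by lra.
  assert (Hp : Rbar_le 1 p) by (destruct p; simpl in *; auto; lra).
  assert (H2 : Rbar_le (INR 2) p) by (destruct p; simpl in *; auto; lra).
  assert (H3 : Rbar_le (INR 3) p) by (destruct p; simpl in *; auto; lra).
  assert (H4 : Rbar_le (INR 4) p) by (destruct p; simpl in *; auto; lra).
  exists (Lfun a b lam theta F v). split. apply L_bl; auto.
  destruct (ok_bound a b (fun x => theta x * (3 / 4 * v x ^ 2 - lam / 2)) hab' ltac:(okt)) as [MA [HMA0 HMA]].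
  destruct (ok_bound a b (fun x => theta x * v x / 2) hab' ltac:(okt)) as [MB [HMB0 HMB]].
  destruct (ok_bound a b (fun x => theta x / 8) hab' ltac:(okt)) as [MC [HMC0 HMC]].
  set (K := (1 + (b - a)) * (MA + MB + MC)).
  assert (HK : 0 <= K) by (unfold K; apply Rmult_le_pos; lra).
  intros eps Heps. exists (Rmin 1 (eps / (K + 1))). split.
  { apply Rmin_pos; [lra| apply Rdiv_lt_0_compat; lra]. }
  intros h [Hh _] [HN0 HNd].
  assert (Hd1 := Rmin_l 1 (eps / (K + 1))). assert (Hd2 := Rmin_r 1 (eps / (K + 1))).
  set (N := pnorm a b p h) in *.
  replace (fun x => v x + h x) with (fun x => v x + 1 * h x) by (apply functional_extensionality; intros; ring).
  rewrite expansion by auto.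
  replace (Kfun a b lam theta F v + 1 * Lfun a b lam theta F v h + 1 ^ 2 * Afun a b lam theta v h +
   1 ^ 3 * Bfun a b theta v h + 1 ^ 4 * Cfun a b theta h - Kfun a b lam theta F v -
   Lfun a b lam theta F v h) with (Afun a b lam theta v h + Bfun a b theta v h + Cfun a b theta h) by ring.
  assert (bA := coef_bound a b p 2 (fun x => theta x * (3 / 4 * v x ^ 2 - lam / 2)) h MA hab Hp ltac:(lia) H2 ltac:(okt) Hh HMA0 HMA).
  assert (bB := coef_bound a b p 3 (fun x => theta x * v x / 2) h MB hab Hp ltac:(lia) H3 ltac:(okt) Hh HMB0 HMB).
  assert (bC := coef_bound a b p 4 (fun x => theta x / 8) h MC hab Hp ltac:(lia) H4 ltac:(okt) Hh HMC0 HMC).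
  fold N in bA, bB, bC. unfold Afun, Bfun, Cfun.
  cbv beta in bA, bB, bC.
  set (IA := RInt (fun x : R => theta x * (3 / 4 * v x ^ 2 - lam / 2) * h x ^ 2) a b) in *.
  set (IB := RInt (fun x : R => theta x * v x / 2 * h x ^ 3) a b) in *.
  set (IC := RInt (fun x : R => theta x / 8 * h x ^ 4) a b) in *.
  assert (N3 : N ^ 3 <= N ^ 2) by (simpl; nra).
  assert (N4 : N ^ 4 <= N ^ 2) by (simpl; assert (N*N <= 1) by nra; nra).
  assert (0 <= 1 + (b - a)) by lra.
  assert (MB * ((1 + (b - a)) * N ^ 3) <= MB * ((1 + (b - a)) * N ^ 2)) by (apply Rmult_le_compat_l; auto; apply Rmult_le_compat_l; auto).
  assert (MC * ((1 + (b - a)) * N ^ 4) <= MC * ((1 + (b - a)) * N ^ 2)) by (apply Rmult_le_compat_l; auto; apply Rmult_le_compat_l; auto).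
  assert (Hsum : Rabs (IA + IB + IC) <= K * N ^ 2).
  { eapply Rle_trans. apply Rabs_triang. eapply Rle_trans. apply Rplus_le_compat_r, Rabs_triang.
    unfold K. lra. }
  eapply Rle_trans; [exact Hsum|].
  assert (N * (K + 1) <= eps).
  { apply Rle_trans with (eps / (K + 1) * (K + 1)). apply Rmult_le_compat_r; lra. right; field; lra. }
  assert (K * N <= eps) by nra.
  replace (K * N ^ 2) with ((K * N) * N) by ring. apply Rmult_le_compat_r; lra.
Qed.


Definition clip (z : R) := (Rabs z - Rabs (z - 1) + 1) / 2.

Lemma clip_range z : 0 <= clip z <= 1.
Proof. unfold clip, Rabs; repeat destruct Rcase_abs; lra. Qed.
Lemma clip_0 z : z <= 0 -> clip z = 0.
Proof. intros; unfold clip, Rabs; repeat destruct Rcase_abs; lra. Qed.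
Lemma clip_1 z : 1 <= z -> clip z = 1.
Proof. intros; unfold clip, Rabs; repeat destruct Rcase_abs; lra. Qed.

Definition trap (c0 w H : R) (x : R) := H * clip (2 - Rabs (x - c0) / w).

Lemma ok_id a b : a <= b -> cont_on a b (fun x => x).
Proof. intros hab. apply ok_iff; auto. intros x. apply cpt_intro. intros eps Heps. exists eps; split; auto.
  intros y Hy. eapply Rle_lt_trans; [apply cl_lip; auto| auto]. Qed.

Lemma ok_abs a b f : a <= b -> cont_on a b f -> cont_on a b (fun x => Rabs (f x)).
Proof. intros hab Hf. apply (ok_comp a b Rabs f); auto. apply Rcontinuity_abs. Qed.

Lemma trap_ok a b c0 w H : a <= b -> cont_on a b (trap c0 w H).
Proof.
  intros hab. unfold trap, clip.
  repeat first [ assumption | apply ok_plus | apply ok_minus | apply ok_mult | apply ok_div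
  | apply ok_abs | apply ok_const | apply ok_id | apply ok_opp ].
Qed.

Lemma trap_range c0 w H x : 0 <= H -> 0 <= trap c0 w H x <= H.
Proof. intros HH. unfold trap. assert (h := clip_range (2 - Rabs (x - c0) / w)). nra. Qed.

Lemma trap_out c0 w H x : 0 < w -> 2 * w <= Rabs (x - c0) -> trap c0 w H x = 0.
Proof.
  intros Hw Hx. unfold trap. rewrite clip_0. ring.
  assert (2 <= Rabs (x - c0) / w).
  { apply Rmult_le_reg_r with w; auto. unfold Rdiv; rewrite Rmult_assoc, Rinv_l; lra. }
  lra.
Qed.

Lemma trap_in c0 w H x : 0 < w -> Rabs (x - c0) <= w -> trap c0 w H x = H.
Proof.
  intros Hw Hx. unfold trap. rewrite clip_1. ring.
  assert (Rabs (x - c0) / w <= 1).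
  { apply Rmult_le_reg_r with w; auto. unfold Rdiv; rewrite Rmult_assoc, Rinv_l; lra. }
  lra.
Qed.

Lemma ok_sub a b a' b' f : a <= a' -> b' <= b -> cont_on a b f -> cont_on a' b' f.
Proof.
  intros H1 H2 Hf x Hx eps Heps. destruct (Hf x ltac:(lra) eps Heps) as [d [Hd Hy]].
  exists d; split; auto. intros y Hy1 Hy2. apply Hy; auto; lra.
Qed.

Lemma RInt_Chasles_R f a m b : a <= m <= b -> cont_on a b f ->
  RInt f a m + RInt f m b = RInt f a b.
Proof.
  intros Hm Hf. exact (@RInt_Chasles R_CompleteNormedModule f a m b ltac:(apply ok_ex; [lra|]; apply (ok_sub a b); auto; lra) ltac:(apply ok_ex; [lra|]; apply (ok_sub a b); auto; lra)).
Qed.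

Lemma RInt_zero_on f a b : a <= b -> (forall x, a < x < b -> f x = 0) -> RInt f a b = 0.
Proof.
  intros hab H. rewrite (RInt_ext f (fun _ => 0)).
  - rewrite RInt_const_R. exact (Rmult_0_l _).
  - intros x Hx. rewrite Rmin_left, Rmax_right in Hx by lra. apply H; auto.
Qed.

Lemma UB a b c0 w f M : a <= c0 - 2 * w -> c0 + 2 * w <= b -> 0 < w -> cont_on a b f ->
  (forall x, a <= x <= b -> 2 * w <= Rabs (x - c0) -> f x = 0) ->
  (forall x, a <= x <= b -> f x <= M) -> RInt f a b <= 4 * w * M.
Proof.
  intros H1 H2 Hw Hf Hz HM.
  rewrite <- (RInt_Chasles_R f a (c0 - 2 * w) b) by (auto; lra).
  rewrite <- (RInt_Chasles_R f (c0 - 2 * w) (c0 + 2 * w) b) by (try apply (ok_sub a b); auto; lra).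
  rewrite (RInt_zero_on f a (c0 - 2 * w)) by (lra || (intros; apply Hz; [lra| unfold Rabs; destruct Rcase_abs; lra])).
  rewrite (RInt_zero_on f (c0 + 2 * w) b) by (lra || (intros; apply Hz; [lra| unfold Rabs; destruct Rcase_abs; lra])).
  assert (RInt f (c0 - 2 * w) (c0 + 2 * w) <= RInt (fun _ => M) (c0 - 2 * w) (c0 + 2 * w)).
  { apply RInt_le'. lra. apply (ok_sub a b); auto; lra. apply ok_const; lra. intros; apply HM; lra. }
  rewrite RInt_const_R in H. lra.
Qed.

Lemma LB a b c0 w f M : a <= c0 - w -> c0 + w <= b -> 0 < w -> cont_on a b f ->
  (forall x, a <= x <= b -> 0 <= f x) ->
  (forall x, Rabs (x - c0) <= w -> M <= f x) -> 2 * w * M <= RInt f a b.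
Proof.
  intros H1 H2 Hw Hf H0 HM.
  rewrite <- (RInt_Chasles_R f a (c0 - w) b) by (auto; lra).
  rewrite <- (RInt_Chasles_R f (c0 - w) (c0 + w) b) by (try apply (ok_sub a b); auto; lra).
  assert (0 <= RInt f a (c0 - w)) by (apply RInt_ge0'; [lra| apply (ok_sub a b); auto; lra| intros; apply H0; lra]).
  assert (0 <= RInt f (c0 + w) b) by (apply RInt_ge0'; [lra| apply (ok_sub a b); auto; lra| intros; apply H0; lra]).
  assert (Hmid : RInt (fun _ => M) (c0 - w) (c0 + w) <= RInt f (c0 - w) (c0 + w)).
  { apply RInt_le'. lra. apply ok_const; lra. apply (ok_sub a b); auto; lra.
    intros; apply HM. unfold Rabs; destruct Rcase_abs; lra. }
  rewrite RInt_const_R in Hmid. lra.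
Qed.

Lemma frechet_neg a b lam theta F v q m :
  a < b -> cont_on a b theta -> cont_on a b F -> in_X a b v -> 0 < m ->
  (forall x, a <= x <= b -> m <= theta x) -> 1 <= q -> q < 4 ->
  ~ frechet_diff a b (pnorm a b (Finite q)) (Kfun a b lam theta F) v.
Proof.
  intros hab Ht HF [Hv _] Hm Htm Hq1 Hq4 [L [[Ladd [Lsc _]] HFr]].
  assert (hab' : a <= b) by lra.
  destruct (HFr 1 Rlt_0_1) as [dl [Hdl Hh]].
  destruct (ok_bound a b (fun x => theta x * (3 / 4 * v x ^ 2 - lam / 2)) hab' ltac:(okt)) as [MA [HMA0 HMA]].
  set (d' := Rmin dl 1).
  assert (Hd' : 0 < d' <= dl) by (split; [apply Rmin_pos; lra| apply Rmin_l]).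
  set (s := Rpower (d' / 2) q).
  assert (Hs : 0 < s) by apply Rpower_pos.
  set (e := Rmin 1 (4 - q)).
  assert (He : 0 < e <= 1) by (split; [apply Rmin_pos; lra| apply Rmin_l]).
  assert (He2 : e <= 4 - q) by apply Rmin_r.
  set (K0 := 1 + 32 * MA / m + 16 * d' / (s * m) + s / (b - a)).
  assert (T1 : 0 <= 32 * MA / m) by (apply Rdiv_le_0_compat; lra).
  assert (T2 : 0 < 16 * d' / (s * m)) by (apply Rdiv_lt_0_compat; [lra| apply Rmult_lt_0_compat; lra]).
  assert (T3 : 0 < s / (b - a)) by (apply Rdiv_lt_0_compat; lra).
  assert (HK0 : 1 <= K0) by (unfold K0; lra).
  assert (K0a : 32 * MA / m <= K0) by (unfold K0; lra).
  assert (K0b : 16 * d' / (s * m) < K0) by (unfold K0; lra).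
  set (H := Rpower K0 (/ e)).
  assert (HH1 : 1 <= H).
  { unfold H. rewrite <- (Rpower_O K0) by lra. apply Rle_Rpower; auto.
    left; apply Rinv_0_lt_compat; lra. }
  assert (Hpow : forall r, e <= r -> K0 <= Rpower H r).
  { intros r Hr. apply Rle_trans with (Rpower H e).
    - unfold H. rewrite Rpower_mult, Rinv_l, Rpower_1; lra.
    - apply Rle_Rpower; auto. }
  set (PHq := Rpower H q).
  assert (HPq : K0 <= PHq) by (apply Hpow; lra).
  set (w := s / (4 * PHq)).
  assert (Hw : 0 < w) by (apply Rdiv_lt_0_compat; lra).
  assert (Hw4 : 4 * w <= b - a).
  { unfold w. replace (4 * (s / (4 * PHq))) with (s / PHq) by (field; lra).
    apply Rmult_le_reg_r with PHq; [lra|]. unfold Rdiv; rewrite Rmult_assoc, Rinv_l by lra.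
    assert (s / (b - a) <= PHq) by (assert (s / (b - a) <= K0) by (unfold K0; lra); lra).
    apply Rmult_le_compat_r with (r := b - a) in H0; [|lra].
    unfold Rdiv in H0; rewrite Rmult_assoc, Rinv_l in H0 by lra. lra. }
  set (c0 := (a + b) / 2).
  set (h := trap c0 w H).
  assert (Hhok : cont_on a b h) by (apply trap_ok; auto).
  assert (Hout : forall x, 2 * w <= Rabs (x - c0) -> h x = 0) by (intros; apply trap_out; auto).
  assert (Hin : forall x, Rabs (x - c0) <= w -> h x = H) by (intros; apply trap_in; auto).
  assert (Hrg : forall x, 0 <= h x <= H) by (intros; apply trap_range; lra).
  assert (Hha : h a = 0) by (apply Hout; unfold c0, Rabs; destruct Rcase_abs; lra).
  assert (Hhb : h b = 0) by (apply Hout; unfold c0, Rabs; destruct Rcase_abs; lra).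
  assert (HXh : in_X a b h) by (split; auto).
  set (hm := fun x => -1 * h x).
  assert (HXm : in_X a b hm).
  { split; [unfold hm; okt|]. unfold hm; rewrite Hha, Hhb; split; ring. }
  set (I := RInt (fun x => rpow (Rabs (h x)) q) a b).
  assert (Cup : cont_on a b (fun x => rpow (Rabs (h x)) q)) by (apply (ok_comp a b (fun z => rpow (Rabs z) q)); auto; apply cont_rpow; lra).
  assert (HIu : I <= 4 * w * PHq).
  { apply (UB a b c0 w); auto; unfold c0; try lra.
    - intros x _ Hx. rewrite Hout by auto. rewrite Rabs_R0, rpow_0. reflexivity.
    - intros x _. destruct (Req_dec (Rabs (h x)) 0) as [E|E].
      + rewrite E, rpow_0. left; apply Rpower_pos.
      + rewrite rpow_nz by auto. apply Rle_Rpower_l; [lra|]. split.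
        * generalize (Rabs_pos (h x)); lra.
        * rewrite Rabs_pos_eq; apply Hrg. }
  assert (HIl : 2 * w * PHq <= I).
  { apply (LB a b c0 w); auto; unfold c0; try lra.
    - intros; apply rpow_ge0.
    - intros x Hx. rewrite Hin by auto. rewrite Rabs_pos_eq, rpow_nz by lra. unfold PHq; lra. }
  assert (E4 : 4 * w * PHq = s) by (unfold w; field; lra).
  assert (HI0 : 0 < I) by (assert (0 < w * PHq) by (apply Rmult_lt_0_compat; lra); lra).
  set (N := pnorm a b (Finite q) h).
  assert (EN : N = Rpower I (/ q)) by (unfold N; simpl; unfold Lpnorm; fold I; apply rpow_nz; lra).
  assert (HN0 : 0 < N) by (rewrite EN; apply Rpower_pos).
  assert (HNd : N <= d' / 2).
  { rewrite EN. replace (d' / 2) with (Rpower s (/ q)).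
    - apply Rle_Rpower_l. left; apply Rinv_0_lt_compat; lra. lra.
    - unfold s. rewrite Rpower_mult, Rinv_r, Rpower_1; lra. }
  assert (ENm : pnorm a b (Finite q) hm = N).
  { unfold N; simpl. unfold Lpnorm. f_equal. f_equal. apply functional_extensionality. intros x.
    unfold hm. rewrite Rabs_mult. replace (Rabs (-1)) with 1 by (rewrite Rabs_left; lra). rewrite Rmult_1_l. reflexivity. }
  assert (B1 := Hh h HXh ltac:(fold N; lra)).
  assert (B2 := Hh hm HXm ltac:(rewrite ENm; lra)).
  rewrite ENm in B2. fold N in B1.
  replace (fun x => v x + h x) with (fun x => v x + 1 * h x) in B1 by (apply functional_extensionality; intros; ring).
  unfold hm in B2. rewrite expansion in B1, B2 by auto.
  rewrite (Lsc (-1) h HXh) in B2.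
  set (Kv := (Kfun a b lam theta F v : R)) in *. set (L0 := Lfun a b lam theta F v h) in *.
  set (A := Afun a b lam theta v h) in *. set (B := Bfun a b theta v h) in *.
  set (C := Cfun a b theta h) in *. set (Lh := L h) in *.
  assert (AC : A + C <= N).
  { generalize (Rle_abs (Kv + 1 * L0 + 1 ^ 2 * A + 1 ^ 3 * B + 1 ^ 4 * C - Kv - Lh)).
    generalize (Rle_abs (Kv + -1 * L0 + (-1) ^ 2 * A + (-1) ^ 3 * B + (-1) ^ 4 * C - Kv - -1 * Lh)).
    simpl in B1, B2 |- *. lra. }
  assert (Ch2 : cont_on a b (fun x => h x ^ 2)) by okt.
  assert (Ch4 : cont_on a b (fun x => h x ^ 4)) by okt.
  assert (HA : - MA * (4 * w * H ^ 2) <= A).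
  { apply Rle_trans with (RInt (fun x => - MA * h x ^ 2) a b).
    - rewrite RInt_scal_R by (apply ok_ex; auto).
      assert (RInt (fun x => h x ^ 2) a b <= 4 * w * H ^ 2).
      { apply (UB a b c0 w); auto; unfold c0; try lra.
        - intros x _ Hx. rewrite Hout by auto. ring.
        - intros x _. destruct (Hrg x). simpl. nra. }
      nra.
    - unfold A, Afun. apply RInt_le'; auto. okt. okt.
      intros x Hx. specialize (HMA x Hx). cbv beta in HMA.
      assert (- MA <= theta x * (3 / 4 * v x ^ 2 - lam / 2)).
      { assert (- (theta x * (3 / 4 * v x ^ 2 - lam / 2)) <= MA) by (eapply Rle_trans; [apply Rle_abs| rewrite Rabs_Ropp; exact HMA]). lra. }
      assert (0 <= h x ^ 2) by (apply pow2_ge_0). nra. }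
  assert (HC : m / 8 * (2 * w * H ^ 4) <= C).
  { apply Rle_trans with (RInt (fun x => m / 8 * h x ^ 4) a b).
    - rewrite RInt_scal_R by (apply ok_ex; auto).
      assert (2 * w * H ^ 4 <= RInt (fun x => h x ^ 4) a b).
      { apply (LB a b c0 w); auto; unfold c0; try lra.
        - intros x _. apply pow_le. apply Hrg.
        - intros x Hx. rewrite Hin by auto. lra. }
      apply Rmult_le_compat_l; auto. lra.
    - unfold C, Cfun. apply RInt_le'; auto. okt. okt.
      intros x Hx. apply Rmult_le_compat_r. apply pow_le, Hrg.
      specialize (Htm x Hx). lra. }
  assert (EH2 : Rpower H 2 = H ^ 2).
  { replace 2 with (INR 2) at 1 by (simpl; ring). apply Rpower_pow; lra. }
  assert (EH4 : Rpower H (4 - q) * PHq = H ^ 4).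
  { unfold PHq. rewrite <- Rpower_plus. replace (4 - q + q) with (INR 4) by (simpl; ring). apply Rpower_pow; lra. }
  assert (HH2 : K0 <= H ^ 2) by (rewrite <- EH2; apply Hpow; lra).
  assert (HH4q : K0 <= Rpower H (4 - q)) by (apply Hpow; lra).
  assert (HmH2 : 32 * MA <= m * H ^ 2).
  { assert (32 * MA / m <= H ^ 2) by lra.
    apply Rmult_le_compat_l with (r := m) in H0; [|lra].
    replace (m * (32 * MA / m)) with (32 * MA) in H0 by (field; lra). lra. }
  assert (Hbig : 16 * d' / (s * m) < Rpower H (4 - q)) by lra.
  assert (Hbig2 : d' / 2 < s * m / 32 * Rpower H (4 - q)).
  { apply Rmult_lt_compat_l with (r := s * m / 32) in Hbig.
    replace (s * m / 32 * (16 * d' / (s * m))) with (d' / 2) in Hbig by (field; lra). exact Hbig.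
    apply Rdiv_lt_0_compat; [apply Rmult_lt_0_compat|]; lra. }
  assert (EW : w * m * H ^ 4 / 8 = s * m / 32 * Rpower H (4 - q)).
  { rewrite <- EH4. unfold w. field. lra. }
  assert (Hlow : w * m * H ^ 4 / 8 <= A + C).
  { assert (0 <= w * H ^ 2) by (apply Rmult_le_pos; [lra| apply pow2_ge_0]).
    assert (EH4' : H ^ 4 = H ^ 2 * H ^ 2) by ring.
    rewrite EH4' in *. nra. }
  lra.
Qed.

Theorem proposition1 (a b lam : R) (theta F : R -> R) (p : Rbar) :
  a < b -> 0 < lam ->
  cont_on a b theta ->
  (exists m, 0 < m /\ forall x, a <= x <= b -> m <= theta x) ->
  C1_on a b F -> F a = 0 -> F b = 0 ->
  (forall x, a < x < b -> F x <> 0) ->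
  supnorm a b F < Rpower (2 * lam / 3) (3 / 2) ->
  Rbar_le 1 p ->
  (forall v, in_X a b v -> gateaux_diff a b (pnorm a b p) (Kfun a b lam theta F) v) /\
  (forall v, in_X a b v ->
     (frechet_diff a b (pnorm a b p) (Kfun a b lam theta F) v <-> Rbar_le 4 p)).
Proof.
  intros hab _ Ht [m [Hm Htm]] HC1 _ _ _ _ Hp.
  assert (HF := C1_cont a b F HC1).
  split.
  - intros v Hv. apply gateaux; auto.
  - intros v Hv. split.
    + intros Hfr. destruct p as [q| |]; simpl in Hp |- *; auto.
      destruct (Rle_or_lt 4 q) as [H4|H4]; auto. exfalso.
      exact (frechet_neg a b lam theta F v q m hab Ht HF Hv Hm Htm Hp H4 Hfr).
    + intros H4. apply frechet_pos; auto.
Qed.
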